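(* Let $N=(V,A)$ be a phylogenetic network on $X$. Then $$l(N)=p(N)=t(N)=(|V|-|X|)-m(\mathcal{G}_N),$$ where $m(\mathcal{G}_N)$ is the size of a maximum matching of $\mathcal{G}_N$.
   Context: $X$ is a nonempty finite set. A phylogenetic network on $X$ is a rooted acyclic digraph with no parallel arcs such that: the unique root has out-degree at least one; $X$ is exactly the set of vertices of out-degree zero (leaves), each of in-degree one; every other vertex either has in-degree one and out-degree at least two (a tree vertex) or in-degree at least two and out-degree one (a reticulation). If $|X|=1$, the network may also consist of the single vertex in $X$. A phylogenetic network $N$ on $X$ is tree-based if it can be obtained from some phylogenetic $X$-tree (phylogenetic network with no reticulations) $T$ by first taking a subdivision of $T$ (new vertices are attachment points) and then adding new arcs $(u,v)$ where either $u$ and $v$ are both attachment points, or $u$ is a non-leaf vertex of $T$ and $v$ is an attachment point; equivalently, $N$ has a rooted spanning tree with the same root as $N$ all of whose leaves lie in $X$. Attaching a new leaf to $N$ means subdividing an arc of $N$ with a new vertex $u$ and adding a new leaf $y$ and the arc $(u,y)$. Define: $l(N)$ is the minimum, over all spanning trees of $N$ rooted at the root of $N$, of the number of leaves of the spanning tree that lie in $V-X$; $p(N)=d(N)-|X|$ where $d(N)$ is the smallest number of vertex-disjoint directed paths of $N$ that partition $V$; $t(N)$ is the minimum number of new leaves that need to be attached (successively) to $N$ so that the resulting network is tree-based. For a digraph $D=(V,A)$, $\mathcal{G}_D$ is the bipartite graph with vertex bipartition $\{V_1,V_2\}$, where $V_1$ and $V_2$ are two disjoint copies of $V$, having an edge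 between the copy of $u$ in $V_1$ and the copy of $v$ in $V_2$ for each arc $(u,v)\in A$. *)

(* Defs.v *)
From HB Require Import structures.
From mathcomp Require Import all_boot.
Set Implicit Arguments. Unset Strict Implicit. Unset Printing Implicit Defensive.

Section Digraph.
Variables (V : finType) (A : rel V).

Definition indeg (v : V) : nat := #|[pred u | A u v]|.
Definition outdeg (v : V) : nat := #|[pred w | A v w]|.

Definition acyclic : Prop := forall u v, A u v -> ~~ connect A v u.

Definition is_root (r : V) : Prop := indeg r = 0.

(* phylogenetic network on X (arcs = the relation A, so no parallel arcs) *)
Definition phylo_net (X : {set V}) : Prop :=
  X != set0 /\ acyclic /\
  exists r, (forall v, is_root v <-> v = r) /\
  ( (#|V| = 1 /\ X = [set: V]) \/
    ( 1 <= outdeg r /\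
      (forall v, (v \in X) = (outdeg v == 0)) /\
      (forall v, v \in X -> indeg v = 1) /\
      (forall v, v != r -> v \notin X ->
         (indeg v = 1 /\ 2 <= outdeg v) \/ (2 <= indeg v /\ outdeg v = 1)) )).

Definition spanning_tree (r : V) (T : {set V * V}) : Prop :=
  (forall e, e \in T -> A e.1 e.2) /\
  (forall v, #|[pred u | (u, v) \in T]| = (if v == r then 0 else 1)) /\
  (forall v, connect (fun x y => (x, y) \in T) r v).

Definition tree_leaf (T : {set V * V}) (v : V) : bool :=
  [forall w, (v, w) \notin T].

Definition bad_leaves (X : {set V}) (T : {set V * V}) : nat :=
  #|[set v | (v \notin X) && tree_leaf T v]|.

Definition path_partition (P : seq (seq V)) : Prop :=
  (forall s, s \in P -> exists x s', s = x :: s' /\ path A x s') /\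
  uniq (flatten P) /\ (forall v, v \in flatten P).

End Digraph.

Definition is_min (P : nat -> Prop) (k : nat) : Prop :=
  P k /\ forall j, P j -> k <= j.

Definition l_val (V : finType) (A : rel V) (X : {set V}) (k : nat) : Prop :=
  is_min (fun j => exists r T, is_root A r /\ spanning_tree A r T /\
                                bad_leaves X T = j) k.

Definition d_val (V : finType) (A : rel V) (k : nat) : Prop :=
  is_min (fun j => exists P, path_partition A P /\ size P = j) k.

Definition bigraph (U W : finType) := U -> W -> bool.

(* G_D : V_1, V_2 two copies of V, edge (u in V_1, v in V_2) iff (u,v) in A *)
Definition G_of (V : finType) (A : rel V) : bigraph V V := fun u v => A u v.

Definition is_matching (U W : finType) (E : bigraph U W) (M : {set U * W}) : bool :=
  [forall e in M, E e.1 e.2] &&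
  [forall e in M, forall f in M, (e != f) ==> ((e.1 != f.1) && (e.2 != f.2))].

Definition max_matching_size (U W : finType) (E : bigraph U W) : nat :=
  \max_(M : {set U * W} | is_matching E M) #|M|.

(* Networks packaged with their vertex type, to speak of attaching leaves *)
Record net := Net { nV : finType; nA : rel nV; nX : {set nV} }.

(* subdivide arc (a,b) with new vertex u := inr false, attach leaf y := inr true *)
Definition attach_A (N : net) (a b : nV N) : rel (nV N + bool)%type :=
  fun x y =>
    match x, y with
    | inl x, inl y => @nA N x y && ~~ ((x == a) && (y == b))
    | inl x, inr false => x == a
    | inr false, inl y => y == b
    | inr false, inr true => true
    | _, _ => false
    end.

Definition attach (N : net) (a b : nV N) : net :=
  @Net (nV N + bool)%type (attach_A a b)
       ((@inl (nV N) bool) @: @nX N :|: [set inr true]).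

Inductive attached : nat -> net -> net -> Prop :=
| attached0 N : attached 0 N N
| attachedS k N N' (a b : nV N) :
    @nA N a b -> attached k (attach a b) N' -> attached k.+1 N N'.

Definition tree_based (N : net) : Prop :=
  exists r T, is_root (@nA N) r /\ spanning_tree (@nA N) r T /\
              (forall v, tree_leaf T v -> v \in @nX N).

Definition t_val (V : finType) (A : rel V) (X : {set V}) (k : nat) : Prop :=
  is_min (fun j => exists N', attached j (Net A X) N' /\ tree_based N') k.

(* Main.v *)
Require Import Defs.
From HB Require Import structures.
From mathcomp Require Import all_boot.
From mathcomp Require Import zify.
Set Implicit Arguments. Unset Strict Implicit. Unset Printing Implicit Defensive.

Lemma matchingP (V : finType) (A : rel V) (M : {set V * V}) :
  is_matching (G_of A) M <->
  ((forall e, e \in M -> A e.1 e.2) /\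
   (forall e f, e \in M -> f \in M -> (e.1 = f.1 \/ e.2 = f.2) -> e = f)).
Proof.
rewrite /is_matching; split.
- case/andP => /forall_inP H1 /forall_inP H2; split=> [e eM|e f eM fM H].
    exact: H1.
  have /forall_inP/(_ f fM) := H2 e eM.
  case: eqP => [//|_] /= /andP[/eqP h1 /eqP h2]; by case: H.
- case=> H1 H2; apply/andP; split; apply/forall_inP => e eM.
    exact: H1.
  apply/forall_inP => f fM; apply/implyP => ef; apply/andP; split; apply/eqP => h.
    by move/eqP: ef; apply; apply: H2 => //; left.
  by move/eqP: ef; apply; apply: H2 => //; right.
Qed.

Lemma match0 (V : finType) (A : rel V) : is_matching (G_of A) set0.
Proof. by apply/matchingP; split=> e; rewrite inE. Qed.

Lemma max_match_ge (V : finType) (A : rel V) (M : {set V * V}) :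
  is_matching (G_of A) M -> #|M| <= max_matching_size (G_of A).
Proof. move=> H; rewrite /max_matching_size.
exact: (@leq_bigmax_cond _ (fun M => is_matching (G_of A) M) (fun M : {set V * V} => #|M|) M H). Qed.

Lemma max_match_ex (V : finType) (A : rel V) :
  exists M : {set V * V}, is_matching (G_of A) M /\ #|M| = max_matching_size (G_of A).
Proof.
have h : 0 < #|[pred M : {set V * V} | is_matching (G_of A) M]|.
  by apply/card_gt0P; exists set0; rewrite inE match0.
have [M MP E] := eq_bigmax_cond (fun M : {set V * V} => #|M|) h.
by exists M; split; [rewrite inE in MP|rewrite /max_matching_size E].
Qed.

Lemma match_fst (V : finType) (A : rel V) (M : {set V * V}) :
  is_matching (G_of A) M -> #|[set e.1 | e in M]| = #|M|.
Proof.
move/matchingP=> [_ H]; apply: card_in_imset => e f eM fM h; apply: H => //; by left.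
Qed.

Lemma indeg_le1 (V : finType) (A : rel V) r (T : {set V * V}) v :
  spanning_tree A r T -> #|[pred u | (u, v) \in T]| <= 1.
Proof. by case=> _ [H _]; rewrite H; case: (v == r). Qed.

Lemma tree_match (V : finType) (A : rel V) (X : {set V}) r (T : {set V * V}) :
  spanning_tree A r T ->
  #|V| <= max_matching_size (G_of A) + bad_leaves X T + #|X|.
Proof.
move=> ST; have [TA _] := ST.
pose M := [set e in T | [pick w | (e.1, w) \in T] == Some e.2].
have MT : forall e, e \in M -> e \in T by move=> e; rewrite inE => /andP[].
have Mm : is_matching (G_of A) M.
  apply/matchingP; split=> [e /MT /TA //|e f eM fM H].
  case: e f eM fM H => [x y] [x' y'] /= eM fM [H|H].
    subst x'; move: eM fM; rewrite !inE /= => /andP[_ /eqP h1] /andP[_ /eqP].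
    by rewrite h1 => -[->].
  subst y'.
  have /card_le1_eqP h := indeg_le1 y ST.
  by rewrite (h x x') // unfold_in /= (MT _ eM, MT _ fM).
have E : [set e.1 | e in M] = [set v | ~~ tree_leaf T v].
  apply/setP => v; rewrite inE /tree_leaf negb_forall; apply/imsetP/existsP.
    by case=> -[a b] eM ->; exists b; rewrite negbK MT.
  case=> w; rewrite negbK => vw.
  case Ep: [pick w | (v, w) \in T] => [w'|].
    have Ep' := Ep; move: Ep; case: pickP => // w'' vw'' [Ew]; subst w''.
    by exists (v, w') => //; rewrite inE vw'' /= Ep'.
  move: Ep; case: pickP => // /(_ w); by rewrite vw.
have c1 := match_fst Mm; rewrite E in c1.
have c2 := max_match_ge Mm.
have c3 := cardsC [set v | ~~ tree_leaf T v].
have sub : ~: [set v | ~~ tree_leaf T v] \subset [set v | (v \notin X) && tree_leaf T v] :|: X.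
  apply/subsetP => v; rewrite !inE negbK => ->; by case: (v \in X).
have c4 := subset_leq_card sub.
have c5 := cardsU [set v | (v \notin X) && tree_leaf T v] X.
rewrite /bad_leaves; lia.
Qed.

Lemma anc_lt (V : finType) (A : rel V) u v :
  acyclic A -> A u v ->
  #|[pred w | connect A w u]| < #|[pred w | connect A w v]|.
Proof.
move=> ac uv; apply: proper_card; apply/properP; split.
  apply/subsetP => w; rewrite !inE => wu; apply: connect_trans wu _; exact: connect1.
exists v; rewrite !inE ?connect0 //; exact: ac.
Qed.

Lemma root_noin (V : finType) (A : rel V) r u : is_root A r -> ~~ A u r.
Proof.
rewrite /is_root /indeg => /card0_eq /(_ u); by rewrite !inE => ->.
Qed.

Lemma match_tree (V : finType) (A : rel V) (X : {set V}) r (M : {set V * V}) :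
  acyclic A -> is_root A r -> (forall v, v != r -> exists u, A u v) ->
  (forall v w, v \in X -> ~~ A v w) -> is_matching (G_of A) M ->
  exists T, spanning_tree A r T /\ bad_leaves X T + #|X| + #|M| <= #|V|.
Proof.
move=> ac rr hin Xo Mm; have [MA Mu] := (matchingP _ _).1 Mm.
pose hasin v := [exists u, (u, v) \in M].
pose T := M :|: [set e | [&& A e.1 e.2, e.2 != r, ~~ hasin e.2 & [pick u | A u e.2] == Some e.1]].
have TA : forall e, e \in T -> A e.1 e.2.
  by move=> e; rewrite !inE => /orP[/MA //|/and4P[]].
have Tpar : forall v, v != r -> exists u, [pred u | (u, v) \in T] =i pred1 u.
  move=> v vr; case: (boolP (hasin v)) => [h|nh].
    have /existsP[u uv] := h.
    exists u => x; rewrite !inE /= h; apply/idP/idP; last by move/eqP->; rewrite uv.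
    rewrite !andbF orbF => xv; apply/eqP; by case: (Mu _ _ xv uv (or_intror erefl)).
  case Ep: [pick u | A u v] => [u|]; last first.
    have [u uv] := hin v vr; move: Ep; case: pickP => // /(_ u); by rewrite uv.
  exists u => x; rewrite !inE /= nh vr Ep /=; apply/idP/idP.
    case/orP=> [xv|/andP[_ /eqP [->]] //].
    by move/negP: nh; case; apply/existsP; exists x.
  move/eqP->; apply/orP; right; have Ep' := Ep; move: Ep; case: pickP => // u' uv [<-].
  by rewrite uv eqxx.
have indeg : forall v, #|[pred u | (u, v) \in T]| = (if v == r then 0 else 1).
  move=> v; case: eqP => [->|/eqP vr].
    apply: eq_card0 => u; rewrite [_ \in pred0]inE unfold_in /=; apply/negP => H; have := TA (u, r) H => /=.
    by rewrite (negbTE (root_noin u rr)).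
  by have [u Hu] := Tpar v vr; apply: eq_card1 Hu.
have conn : forall v, connect (fun x y => (x, y) \in T) r v.
  suff H : forall n v, #|[pred w | connect A w v]| < n -> connect (fun x y => (x, y) \in T) r v.
    move=> v; exact: (H _ v (ltnSn _)).
  elim=> [//|n IH] v hv; case: (eqVneq v r) => [->|vr]; first exact: connect0.
  have [u Hu] := Tpar v vr.
  have uvT : (u, v) \in T by have := Hu u; rewrite !inE eqxx.
  apply: connect_trans (IH u _) (connect1 _); last exact: uvT.
  have h : A u v := TA _ uvT.
  have := anc_lt ac h; lia.
exists T; split; first by split.
have sub : [set v | (v \notin X) && tree_leaf T v] \subset ~: (X :|: [set e.1 | e in M]).
  apply/subsetP => v; rewrite !inE => /andP[/negbTE -> /forallP lf] /=; apply/imsetP => -[e eM ev].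
  by move: (lf e.2); rewrite ev -surjective_pairing !inE eM.
have dis : [disjoint X & [set e.1 | e in M]].
  rewrite -setI_eq0; apply/eqP/setP => v; rewrite !inE; apply/negP => /andP[vX /imsetP[e eM ev]].
  by move: (Xo v e.2 vX); rewrite ev (MA e eM).
have c1 := subset_leq_card sub.
have c2 := cardsC (X :|: [set e.1 | e in M]).
have c3 := cardsU X [set e.1 | e in M].
move: dis; rewrite -setI_eq0 => /eqP dis; rewrite dis cards0 in c3.
rewrite (match_fst Mm) in c3.
rewrite /bad_leaves; lia.
Qed.

Lemma seq_match (V : finType) (A : rel V) (s : seq V) :
  uniq s -> sorted A s ->
  exists M : {set V * V}, [/\ is_matching (G_of A) M, #|M| = (size s).-1 &
    forall e, e \in M -> e.1 \in s /\ e.2 \in behead s].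
Proof.
elim: s => [|x s IH]; first by exists set0; split; [exact: match0|rewrite cards0|move=> e; rewrite inE].
case: s IH => [|y s] IH.
  by exists set0; split; [exact: match0|rewrite cards0|move=> e; rewrite inE].
move=> /= /andP[xys /andP[yns us]] /andP[xy pys].
have [M' [Mm' cM' HM']] := IH (introT andP (conj yns us)) pys.
have [MA Mu] := (matchingP _ _).1 Mm'.
exists ((x, y) |: M'); split.
- apply/matchingP; split.
    by move=> e; rewrite !inE => /orP[/eqP -> //|/MA].
  move=> e f; rewrite !inE => /orP[/eqP->|eM] /orP[/eqP->|fM] //.
  + have [f1 f2] := HM' f fM; move=> /= [h|h].
      by move: xys; rewrite h f1.
    by move: yns; rewrite h f2.
  + have [e1 e2] := HM' e eM; move=> /= [h|h].
      by move: xys; rewrite -h e1.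
    by move: yns; rewrite -h e2.
  + exact: Mu.
- rewrite cardsU1 cM' /=.
  suff -> : (x, y) \notin M' by [].
  by apply/negP => /HM' [/= h _]; move: xys; rewrite h.
- move=> e; rewrite !inE => /orP[/eqP->|/HM' [h1 h2]] /=.
    by rewrite !eqxx.
  by move: h1; rewrite inE => ->; rewrite !orbT h2 orbT.
Qed.

Lemma part_match (V : finType) (A : rel V) (P : seq (seq V)) :
  (forall s, s \in P -> s != [::] /\ sorted A s) -> uniq (flatten P) ->
  exists M : {set V * V}, [/\ is_matching (G_of A) M,
    #|M| + size P = size (flatten P) &
    forall e, e \in M -> e.1 \in flatten P /\ e.2 \in flatten P].
Proof.
elim: P => [|s P IH] HP.
  by exists set0; split; [exact: match0|rewrite cards0|move=> e; rewrite inE].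
rewrite /= cat_uniq => /and3P[us dis uP].
have [sn ss] := HP s (mem_head _ _).
have [Ms [Mms cMs HMs]] := seq_match us ss.
have [MP [MmP cMP HMP]] := IH (fun s' h => HP s' (@mem_behead _ (s :: P) _ h)) uP.
have [MAs Mus] := (matchingP _ _).1 Mms.
have [MAP MuP] := (matchingP _ _).1 MmP.
have Hs : forall e, e \in Ms -> e.1 \in s /\ e.2 \in s.
  by move=> e /HMs [h1 h2]; split => //; apply: mem_behead.
have nd : forall v, v \in s -> v \in flatten P -> False.
  by move=> v vs vP; move/hasPn: dis => /(_ v vP); rewrite vs.
exists (Ms :|: MP); split.
- apply/matchingP; split.
    by move=> e; rewrite inE => /orP[/MAs|/MAP].
  move=> e f; rewrite !inE => /orP[eM|eM] /orP[fM|fM].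
  + exact: Mus.
  + have [e1 e2] := Hs e eM; have [f1 f2] := HMP f fM.
    by case=> h; exfalso; [apply: (nd e.1) => //; rewrite h|apply: (nd e.2) => //; rewrite h].
  + have [e1 e2] := HMP e eM; have [f1 f2] := Hs f fM.
    by case=> h; exfalso; [apply: (nd f.1) => //; rewrite -h|apply: (nd f.2) => //; rewrite -h].
  + exact: MuP.
- have c := cardsU Ms MP.
  have E0 : Ms :&: MP = set0.
    apply/setP => e; rewrite !inE; apply/negP => /andP[/Hs [h _] /HMP [h' _]].
    exact: (nd e.1).
  rewrite E0 cards0 in c; rewrite c size_cat /=.
  rewrite cMs; move: cMP; case: (s) sn => // x s' _ /=; lia.
- move=> e; rewrite inE !mem_cat => /orP[/Hs [-> ->] //|/HMP [-> ->]]; by rewrite !orbT.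
Qed.

Lemma flatten_size (V : finType) (P : seq (seq V)) :
  uniq (flatten P) -> (forall v, v \in flatten P) -> size (flatten P) = #|V|.
Proof.
move=> u c; rewrite -(card_uniqP u); apply: eq_card => v; by rewrite c.
Qed.

Lemma pp_match (V : finType) (A : rel V) (P : seq (seq V)) :
  path_partition A P -> size P <= #|V| /\ #|V| - size P <= max_matching_size (G_of A).
Proof.
case=> HP [u c].
have HP' : forall s, s \in P -> s != [::] /\ sorted A s.
  by move=> s /HP [x [s' [-> h]]].
have [M [Mm cM _]] := part_match HP' u.
have := max_match_ge Mm; rewrite (flatten_size u c) in cM; lia.
Qed.

Lemma sorted_connect (V : finType) (R : rel V) x s y :
  sorted R (x :: s) -> y \in x :: s -> connect R x y.
Proof.
elim: s x => [|z s IH] x /=.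
  by rewrite inE => _ /eqP ->.
case/andP => xz pz; rewrite inE => /orP[/eqP ->//|ys].
apply: connect_trans (connect1 xz) _; exact: IH.
Qed.

Lemma sorted_join (T : eqType) (R : rel T) s u w q :
  sorted R (rcons s u) -> R u w -> sorted R (w :: q) -> sorted R (rcons s u ++ w :: q).
Proof.
case: s => [|x s] /=; first by move=> _ -> ->.
by rewrite cat_path last_rcons => -> /= -> ->.
Qed.

Lemma flatten_single (T : Type) (s : seq T) : flatten [seq [:: x] | x <- s] = s.
Proof. by elim: s => //= x s ->. Qed.

Lemma es_part (V : finType) (A : rel V) (M : {set V * V}) :
  acyclic A -> is_matching (G_of A) M ->
  forall es : seq (V * V), uniq es -> {subset es <= M} ->
  exists P : seq (seq V), [/\ forall s, s \in P -> s != [::] /\ sorted (fun x y => (x, y) \in es) s,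
     uniq (flatten P), forall v, v \in flatten P & size P + size es = #|V|].
Proof.
move=> ac Mm; have [MA Mu] := (matchingP _ _).1 Mm.
elim=> [|[u w] es IH] /=.
  move=> _ _; exists [seq [:: v] | v <- enum V]; split.
  - by move=> s /mapP [v _ ->].
  - by rewrite flatten_single enum_uniq.
  - by move=> v; rewrite flatten_single mem_enum.
  - by rewrite size_map addn0 cardE.
case/andP => nin ues sub.
have [P [HP uP cP sP]] := IH ues (fun e h => sub e (@mem_behead _ ((u, w) :: es) _ h)).
have uwM : (u, w) \in M by apply: sub; rewrite mem_head.
have Auw : A u w := MA _ uwM.
set R' := fun x y => (x, y) \in es.
have R'M : forall x y, R' x y -> (x, y) \in M by move=> x y h; apply: sub; rewrite inE; apply/orP; right.
have R'A : forall x y, R' x y -> A x y by move=> x y /R'M /MA.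
have [p0 pP up] := flattenP (cP u).
have [q0 qP wq] := flattenP (cP w).
case/splitPr: up pP => p1 p2 pP.
case: p2 pP => [|z p2] pP; last first.
  have := HP _ pP; case=> _ /cat_sorted2 [_ /= /andP [uz _]].
  have E := Mu _ _ (R'M _ _ uz) uwM (or_introl erefl); case: E => E; subst z.
  by move: nin; rewrite uz.
case/splitPr: wq qP => q1 q2 qP.
case/lastP: q1 qP => [|q1 z] qP; last first.
  have := HP _ qP; rewrite cat_rcons; case=> _ /cat_sorted2 [_ /= /andP [zw _]].
  have E := Mu _ _ (R'M _ _ zw) uwM (or_intror erefl); case: E => E; subst z.
  by move: nin; rewrite zw.
rewrite cat0s in qP.
set p := p1 ++ [:: u] in pP *.
set q := w :: q2 in qP *.
have pq : p != q.
  apply/eqP => pq; have [_ sq] := HP _ qP.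
  have : u \in q by rewrite -pq /p mem_cat mem_head orbT.
  move/(sorted_connect (sub_sorted R'A sq)) => wu.
  by move: (ac _ _ Auw); rewrite wu.
case/splitPr: pP HP uP cP sP qP => P1 P2 HP uP cP sP qP.
have pP : p \in P1 ++ p :: P2 by rewrite mem_cat mem_head orbT.
have qin : q \in P1 ++ P2.
  move: qP; rewrite !mem_cat inE; by rewrite eq_sym (negbTE pq).
move: qin; move E: (P1 ++ P2) => PP qin; move: E; case/splitPr: qin => Q1 Q2 E.
have pe : perm_eq (P1 ++ p :: P2) (p :: q :: (Q1 ++ Q2)).
  rewrite -[P1 ++ p :: P2]/(P1 ++ [:: p] ++ P2) perm_catCA /= perm_cons E.
  by rewrite -[Q1 ++ q :: Q2]/(Q1 ++ [:: q] ++ Q2) perm_catCA.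
exists ((p ++ q) :: (Q1 ++ Q2)).
have pf : perm_eq (flatten (P1 ++ p :: P2)) (flatten ((p ++ q) :: (Q1 ++ Q2))).
  apply: (perm_trans (perm_flatten pe)); by rewrite /= -catA.
split.
- move=> s; rewrite inE => /orP[/eqP ->|sQ].
    split; first by rewrite /p; case: (p1).
    rewrite /p /q cats1; apply: sorted_join.
    + have [_ h] := HP _ pP; rewrite -cats1; apply: sub_sorted h => x y; rewrite /R' inE => ->; by rewrite orbT.
    + by rewrite inE eqxx.
    + have [_ h] := HP _ qP; apply: sub_sorted h => x y; rewrite /R' inE => ->; by rewrite orbT.
  have sP' : s \in P1 ++ p :: P2 by rewrite (perm_mem pe) !inE sQ !orbT.
  have [h1 h2] := HP _ sP'; split => //; apply: sub_sorted h2 => x y; rewrite /R' inE => ->; by rewrite orbT.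
- by rewrite -(perm_uniq pf).
- by move=> v; rewrite -(perm_mem pf).
- by move: sP; rewrite (perm_size pe) /=; lia.
Qed.

Lemma match_pp (V : finType) (A : rel V) (M : {set V * V}) :
  acyclic A -> is_matching (G_of A) M ->
  exists P, path_partition A P /\ size P + #|M| = #|V|.
Proof.
move=> ac Mm; have [MA _] := (matchingP _ _).1 Mm.
have [P [HP uP cP sP]] := es_part ac Mm (enum_uniq M) (fun e h => ltac:(by rewrite mem_enum in h)).
exists P; split; last by rewrite cardE.
split=> // s /HP [sn ss].
case: s sn ss => // x s' _ h; exists x, s'; split => //.
apply: sub_sorted h => a b /=; rewrite mem_enum; exact: (MA (a, b)).
Qed.

Lemma card_inl (T : finType) (P : pred (T + bool)) :
  (forall b, P (inr b) = false) -> #|[pred z | P z]| = #|[pred x | P (inl x)]|.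
Proof.
move=> Pr; rewrite -(card_imset [pred x | P (inl x)] (@inl_inj T bool)).
apply: eq_card => -[x|b]; rewrite !inE /=.
  by apply/idP/imsetP => [h|[y]]; [exists x|rewrite inE => h [->]].
rewrite Pr; apply/esym/negP => /imsetP [y _] //.
Qed.

Lemma connect_map (T1 T2 : finType) (e1 : rel T1) (e2 : rel T2) (f : T1 -> T2) :
  (forall x y, e1 x y -> e2 (f x) (f y)) ->
  forall x y, connect e1 x y -> connect e2 (f x) (f y).
Proof.
move=> H x y /connectP [p pth ->].
elim: p x pth => [|z p IH] x /=; first by move=> _; exact: connect0.
case/andP => xz pz; apply: connect_trans (connect1 (H _ _ xz)) (IH _ pz).
Qed.


Definition ext_T (V : finType) (T : {set V * V}) (v : V) : {set (V + bool) * (V + bool)} :=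
  [set e | match e with
           | (inl x, inl y) => (x, y) \in T
           | (inl x, inr false) => x == v
           | (inr false, inr true) => true
           | _ => false end].

Lemma extend (N : net) r (T : {set nV N * nV N}) (v w : nV N) :
  is_root (@nA N) r -> spanning_tree (@nA N) r T -> tree_leaf T v -> v \notin @nX N ->
  @nA N v w ->
  [/\ is_root (@nA (attach v w)) (inl r),
      spanning_tree (@nA (attach v w)) (inl r) (ext_T T v) &
      bad_leaves (@nX (attach v w)) (ext_T T v) + 1 = bad_leaves (@nX N) T].
Proof.
move=> rr [TA [Tin Tc]] lv vX vw.
have lv' : forall y, (v, y) \notin T by move/forallP: lv.
have wr : w != r by apply/eqP => E; move: (root_noin v rr); rewrite -E vw.
split.
- rewrite /is_root /indeg; apply: eq_card0 => -[x|[|]]; rewrite !inE /= //.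
    by rewrite (negbTE (root_noin x rr)).
  by apply/negbTE; rewrite eq_sym.
- split; [|split].
  + move=> [[x|[|]] [y|[|]]]; rewrite inE //=.
    * move=> xy; rewrite (TA _ xy) /=; apply/negP => /andP[/eqP E1 /eqP E2].
      by move: (lv' y); rewrite -E1 xy.
  + move=> [y|[|]].
    * rewrite (card_inl (P := fun z => (z, inl y) \in ext_T T v)); last by move=> [|]; rewrite inE.
      rewrite -(Tin y); apply: eq_card => x; by rewrite !inE.
    * rewrite (@eq_card1 _ (inr false)) // => z; rewrite !inE; case: z => [x|[|]] //=.
    * rewrite (@eq_card1 _ (inl v)) // => z; rewrite !inE; case: z => [x|[|]] //=.
  + have base : forall y, connect (fun x y => (x, y) \in ext_T T v) (inl r) (inl y).
      move=> y; apply: (connect_map (e1 := fun x y => (x, y) \in T)) (Tc y).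
      by move=> a b; rewrite inE.
    have cf : connect (fun x y => (x, y) \in ext_T T v) (inl r) (inr false).
      apply: connect_trans (base v) (connect1 _); by rewrite inE /=.
    move=> [y|[|]] //; apply: connect_trans cf (connect1 _); by rewrite inE.
- have E : [set z | (z \notin @nX (attach v w)) && tree_leaf (ext_T T v) z] =
           inl @: ([set x | (x \notin @nX N) && tree_leaf T x] :\ v).
    apply/setP => -[x|[|]]; rewrite !inE /=.
    + apply/idP/imsetP.
      * case/andP => xX /forallP lx; exists x => //; rewrite !inE.
        have xv : x != v by move: (lx (inr false)); rewrite inE.
        rewrite xv /=; apply/andP; split.
          by apply/negP => xX'; move: xX; rewrite (imset_f inl xX').
        apply/forallP => y; move: (lx (inl y)); by rewrite inE.
      * case=> y; rewrite !inE => /andP[yv /andP[yX /forallP ly]] [->].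
        apply/andP; split.
          by rewrite (mem_imset _ _ (@inl_inj _ _)) /= orbF.
        apply/forallP => -[z|[|]]; rewrite inE //=.
    + rewrite eqxx orbT /=; apply/esym/negP => /imsetP [y _] //.
    + have -> : tree_leaf (ext_T T v) (inr false) = false.
        by apply/negbTE/forallPn; exists (inr true); rewrite inE negbK.
      rewrite andbF; apply/esym/negP => /imsetP [y _] //.
  rewrite /bad_leaves E card_imset; last exact: inl_inj.
  rewrite [in RHS](cardsD1 v) inE vX /=.
  by rewrite lv addnC.
Qed.

Lemma connect_ind' (T : finType) (e : rel T) (Q : T -> Prop) :
  (forall x y, e x y -> Q x -> Q y) -> forall x y, connect e x y -> Q x -> Q y.
Proof.
move=> H x y /connectP [p pth ->].
elim: p x pth => [|z p IH] x //= /andP[xz pz] Qx; apply: IH pz _; exact: H xz Qx.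
Qed.

Lemma contract (N : net) (a b : nV N) r' (T' : {set (nV N + bool) * (nV N + bool)}) :
  @nA N a b -> is_root (@nA (attach a b)) r' -> spanning_tree (@nA (attach a b)) r' T' ->
  exists r T, [/\ is_root (@nA N) r, spanning_tree (@nA N) r T &
     bad_leaves (@nX N) T <= bad_leaves (@nX (attach a b)) T' + 1].
Proof.
move=> ab rr' [T'A [T'in T'c]].
have [r Er] : exists r, r' = inl r.
  case: r' rr' T'in T'c => [r|[|]] rr' _ _; first by exists r.
    by move: (root_noin (inr false) rr').
  by move: (root_noin (inl a) rr'); rewrite /= eqxx.
subst r'.
have T'A' : forall x y, (x, y) \in T' -> attach_A a b x y by move=> x y /T'A.
have nopar : forall u, (u, inl r) \notin T'.
  move=> u; apply/negP => h; have e0 := T'in (inl r); rewrite eqxx in e0.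
  by have := card0_eq e0 u; rewrite !inE h.
have Tpar : forall z, z != inl r -> exists u, forall w, ((w, z) \in T') = (w == u).
  move=> z zr; have /card1P [u Hu] : #|[pred u | (u, z) \in T']| == 1 by rewrite T'in (negbTE zr).
  by exists u => w; move: (Hu w); rewrite !inE.
exists r, [set e | ((inl e.1, inl e.2) \in T') || ((e == (a, b)) && ((inr false, inl b) \in T'))].
set T := [set e | _].
split.
- rewrite /is_root /indeg; apply: eq_card0 => u; rewrite !inE; apply/negbTE/negP => ur.
  case: (eqVneq (u, r) (a, b)) => [[_ E]|ne].
    by move: (root_noin (inr false) rr'); rewrite /= E eqxx.
  move: (root_noin (inl u) rr'); rewrite /= ur /=.
  by move: ne; rewrite xpair_eqE => ->.
- split; [|split].
  + move=> [x y]; rewrite inE /= => /orP[/T'A' /= /andP[] //|/andP[/eqP [-> ->] _]] //.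
  + move=> v; case: eqVneq => [->|vr].
      apply: eq_card0 => x; rewrite !inE /= (negbTE (nopar _)) /=.
      apply/negP => /andP[/eqP [_ E] h]; by move: (nopar (inr false)); rewrite E h.
    have vr' : inl v != inl r :> (nV N + bool) by rewrite (inj_eq (@inl_inj _ _)).
    have [[x|[|]] Hu] := Tpar (inl v) vr'.
    * apply: (@eq_card1 _ x) => y; rewrite !inE /= Hu (inj_eq (@inl_inj _ _)).
      case: (y == x) => //=; apply/negP => /andP[/eqP [_ E] h].
      by move: (Hu (inr false)); rewrite E h.
    * have := Hu (inr true); rewrite eqxx => /T'A' //.
    * have := Hu (inr false); rewrite eqxx => h.
      have /eqP E := T'A' _ _ h; subst v.
      apply: (@eq_card1 _ a) => y; rewrite !inE /= Hu /= h.
      by rewrite xpair_eqE eqxx !andbT.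
  + move=> v.
    pose Q (z : nV N + bool) := match z with
      | inl v => connect (fun x y => (x, y) \in T) r v
      | inr _ => connect (fun x y => (x, y) \in T) r a end.
    suff : Q (inl v) by [].
    apply: (@connect_ind' _ (fun x y => (x, y) \in T') Q _ (inl r) (inl v) (T'c (inl v))); last exact: connect0.
    move=> [x|[|]] [y|[|]] h /= Qx; have := T'A' _ _ h; rewrite /= => hA //.
    * apply: connect_trans Qx (connect1 _); by rewrite inE /= h.
    * by rewrite -(eqP hA).
    * rewrite (eqP hA); apply: connect_trans Qx (connect1 _).
      move: h; rewrite (eqP hA) => h; by rewrite inE /= h eqxx orbT.
- set S := [set v | inl v \in [set z | (z \notin @nX (attach a b)) && tree_leaf T' z]].
  have sub : [set v | (v \notin @nX N) && tree_leaf T v] \subset a |: S.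
    apply/subsetP => v; rewrite !inE => /andP[vX /forallP lv].
    case: eqVneq => //= va; apply/andP; split.
      by rewrite (mem_imset _ _ (@inl_inj _ _)) /= orbF.
    apply/forallP => -[y|[|]].
    + by apply/negP => h; move: (lv y); rewrite inE /= h.
    + by apply/negP => /T'A'.
    + by apply/negP => /T'A' /= /eqP E; move: va; rewrite E eqxx.
  have c1 := subset_leq_card sub.
  have c2 := cardsU1 a S.
  have c3 : #|S| <= bad_leaves (@nX (attach a b)) T'.
    rewrite /bad_leaves -(card_imset S (@inl_inj _ bool)); apply: subset_leq_card.
    by apply/subsetP => z /imsetP [v]; rewrite inE => h ->.
  rewrite /bad_leaves; move: c1 c2 c3; rewrite /bad_leaves; case: (a \notin S) => /=; lia.
Qed.

Lemma t_lower j N N' : attached j N N' -> tree_based N' ->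
  exists r T, [/\ is_root (@nA N) r, spanning_tree (@nA N) r T & bad_leaves (@nX N) T <= j].
Proof.
elim=> {j N N'} [N|k N N' a b ab _ IH] tb.
  case: tb => r [T [rr [ST lf]]]; exists r, T; split => //.
  rewrite leqn0; apply/eqP/eq_card0 => v; rewrite !inE.
  apply/negP => /andP[vX /lf]; by rewrite (negbTE vX).
have [r' [T' [rr' ST' bT']]] := IH tb.
have [r [T [rr ST bT]]] := contract ab rr' ST'.
exists r, T; split => //; lia.
Qed.

Lemma t_upper k : forall N r T, (forall v, v \notin @nX N -> exists w, @nA N v w) ->
  is_root (@nA N) r -> spanning_tree (@nA N) r T -> bad_leaves (@nX N) T = k ->
  exists N', attached k N N' /\ tree_based N'.
Proof.
elim: k => [|k IH] N r T Xout rr ST bT.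
  exists N; split; first exact: attached0.
  exists r, T; split => //; split => // v lv; apply/negPn/negP => vX.
  have := card0_eq bT v; by rewrite !inE vX lv.
have : 0 < bad_leaves (@nX N) T by rewrite bT.
case/card_gt0P => v; rewrite inE => /andP[vX lv].
have [w vw] := Xout v vX.
have [rr' ST' bT'] := extend rr ST lv vX vw.
have Xout' : forall z, z \notin @nX (attach v w) -> exists y, @nA (attach v w) z y.
  move=> [x|[|]]; rewrite !inE /=.
  - rewrite (mem_imset _ _ (@inl_inj _ _)) orbF => xX.
    have [y xy] := Xout x xX.
    case: (eqVneq x v) => [->|xv]; first by exists (inr false); rewrite /= ?eqxx.
    by exists (inl y); rewrite /= xy.
  - by rewrite eqxx orbT.
  - by move=> _; exists (inr true).
have [N' [att tb]] := IH _ _ _ Xout' rr' ST' (ltac:(lia)).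
exists N'; split => //; exact: (attachedS vw att).
Qed.

Theorem theorem5 (V : finType) (A : rel V) (X : {set V}) :
  phylo_net A X ->
  let n := (#|V| - #|X|) - max_matching_size (G_of A) in
  l_val A X n /\
  (exists d, d_val A d /\ d - #|X| = n) /\
  t_val A X n.
Proof.
case=> X0 [ac [r [rootiff H]]] n.
have rr : is_root A r by apply/rootiff.
have hin : forall v, v != r -> exists u, A u v.
  move=> v vr; have : indeg A v != 0.
    by apply/eqP => h; move/eqP: vr; apply; apply/rootiff.
  by rewrite -lt0n => /card_gt0P [u]; rewrite inE; exists u.
have Xo : forall v w, v \in X -> ~~ A v w.
  case: H => [[c1 _]|[_ [Xd _]]] v w vX.
    apply/negP => vw; have E : v = w.
      have /card_le1_eqP h : #|V| <= 1 by rewrite c1.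
      by symmetry; apply: h.
    by move: (ac _ _ vw); rewrite E connect0.
  move: vX; rewrite Xd => /eqP /card0_eq /(_ w); by rewrite !inE => ->.
have Xout : forall v, v \notin X -> exists w, A v w.
  case: H => [[_ ->]|[_ [Xd _]]] v; first by rewrite inE.
  by rewrite Xd -lt0n => /card_gt0P [w]; rewrite inE; exists w.
have [M [Mm cM]] := max_match_ex A.
have [T [ST bT]] := match_tree ac rr hin Xo Mm.
have bT2 := tree_match X ST.
have bTn : bad_leaves X T = n by rewrite /n; lia.
split; [|split].
- split; first by exists r, T.
  move=> j [r' [T' [_ [ST' <-]]]]; have := tree_match X ST'; rewrite /n; lia.
- have [P [PP sP]] := match_pp ac Mm.
  exists (#|V| - max_matching_size (G_of A)); split; last by rewrite /n; lia.
  split; first by exists P; split => //; lia.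
  move=> j [P' [PP' <-]]; have := pp_match PP'; lia.
- split.
    have [N' [att tb]] := @t_upper n (Net A X) r T Xout rr ST bTn.
    by exists N'.
  move=> j [N' [att tb]]; have [r' [T' [_ ST' b']]] := t_lower att tb.
  rewrite /= in ST' b'; have := tree_match X ST'; rewrite /n; lia.
Qed.
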